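(* Let $X$ be a metrizable space, $G$ a group and $\varphi\colon G\times X\to X$ an action which is metric-independent expansive (MIE). If $Y\subseteq X$ is a closed subset which is invariant ($g\cdot y\in Y$ for all $g\in G$, $y\in Y$), then the restricted action of $G$ on $Y$ (with the subspace topology) is MIE.
   Context: We write $g\cdot x=\varphi(g,x)$. If $d$ is a metric on $X$, the action is expansive with respect to $d$ if there is $c>0$ such that for all $x\neq y$ in $X$ there is $g\in G$ with $d(g\cdot x,g\cdot y)>c$. The action is metric-independent expansive (MIE) if it is expansive with respect to every metric compatible with the topology of $X$. *)

(* Defs.v *)
From HB Require Import structures.
From mathcomp Require Import all_boot all_classical topology.
From Stdlib Require Import Reals.

Set Implicit Arguments. Unset Strict Implicit. Unset Printing Implicit Defensive.

Local Open Scope classical_set_scope.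
Local Open Scope R_scope.

Definition is_group (G : Type) (mul : G -> G -> G) (one : G) (inv : G -> G) : Prop :=
  (forall a b c, mul a (mul b c) = mul (mul a b) c) /\
  (forall a, mul one a = a) /\ (forall a, mul a one = a) /\
  (forall a, mul (inv a) a = one) /\ (forall a, mul a (inv a) = one).

Definition is_action (G T : Type) (mul : G -> G -> G) (one : G)
  (phi : G -> T -> T) : Prop :=
  (forall x, phi one x = x) /\
  (forall g h x, phi (mul g h) x = phi g (phi h x)).

Definition is_metric (T : Type) (d : T -> T -> R) : Prop :=
  (forall x y, 0 <= d x y) /\
  (forall x y, d x y = 0 <-> x = y) /\
  (forall x y, d x y = d y x) /\
  (forall x y z, d x z <= d x y + d y z).

Definition compatible_metric (T : Type) (op : set T -> Prop) (d : T -> T -> R) : Prop :=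
  is_metric d /\
  forall A : set T,
    op A <-> (forall x, A x -> exists e, 0 < e /\ forall y, d x y < e -> A y).

Definition metrizable (T : Type) (op : set T -> Prop) : Prop :=
  exists d : T -> T -> R, compatible_metric op d.

Definition expansive (G T : Type) (phi : G -> T -> T) (d : T -> T -> R) : Prop :=
  exists c, 0 < c /\
    forall x y, x <> y -> exists g, d (phi g x) (phi g y) > c.

Definition MIE (G T : Type) (op : set T -> Prop) (phi : G -> T -> T) : Prop :=
  forall d : T -> T -> R, compatible_metric op d -> expansive phi d.

Definition subspace_open (X : topologicalType) (Y : set X)
  (B : set {x : X | Y x}) : Prop :=
  exists U : set X, open U /\ B = (fun y => U (proj1_sig y)).

Definition action_invariant (G X : Type) (phi : G -> X -> X) (Y : set X) : Prop :=
  forall g y, Y y -> Y (phi g y).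

Definition restrict_action (G X : Type) (phi : G -> X -> X) (Y : set X)
  (HY : action_invariant phi Y) (g : G) (y : {x : X | Y x}) : {x : X | Y x} :=
  exist _ (phi g (proj1_sig y)) (HY g (proj1_sig y) (proj2_sig y)).

(* Main.v *)
Require Import Defs.
From mathcomp Require Import all_boot all_classical topology.
From Stdlib Require Import Reals Lra ClassicalEpsilon ProofIrrelevance.
Local Open Scope R_scope.


Definition Sup (S : R -> Prop) : R :=
  epsilon (inhabits 0) (fun m => (forall r, S r -> r <= m) /\
     (forall z, (forall r, S r -> r <= z) -> m <= z)).

Lemma Sup_spec S r0 b : S r0 -> (forall r, S r -> r <= b) ->
  (forall r, S r -> r <= Sup S) /\ (forall z, (forall r, S r -> r <= z) -> Sup S <= z).
Proof.
intros H0 Hb. unfold Sup. apply epsilon_spec.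
destruct (completeness S) as [m [Hm1 Hm2]].
- exists b. exact Hb.
- exists r0. exact H0.
- exists m. split; [exact Hm1|]. intros z Hz. apply Hm2. exact Hz.
Qed.

Definition Inf (S : R -> Prop) : R := - Sup (fun r => S (- r)).

Lemma Inf_spec S r0 b : S r0 -> (forall r, S r -> b <= r) ->
  (forall r, S r -> Inf S <= r) /\ (forall z, (forall r, S r -> z <= r) -> z <= Inf S).
Proof.
intros H0 Hb. destruct (Sup_spec (fun r => S (-r)) (-r0) (-b)) as [H1 H2].
- rewrite Ropp_involutive. exact H0.
- intros r Hr. specialize (Hb _ Hr). lra.
- unfold Inf. split.
  + intros r Hr. assert (-r <= Sup (fun r => S (-r))). apply H1. rewrite Ropp_involutive. exact Hr. lra.
  + intros z Hz. assert (Sup (fun r => S (-r)) <= - z). apply H2. intros r Hr. specialize (Hz _ Hr). lra. lra.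
Qed.

Lemma Inf_lt S r0 b t : S r0 -> (forall r, S r -> b <= r) -> Inf S < t ->
  exists r, S r /\ r < t.
Proof.
intros H0 Hb Ht. destruct (Inf_spec S r0 b H0 Hb) as [_ H2].
apply NNPP. intro Hn. assert (t <= Inf S). apply H2. intros r Hr.
destruct (Rlt_le_dec r t) as [h|h]; [|exact h]. exfalso. apply Hn. exists r. split; assumption. lra.
Qed.


Definition delta {X : Type} (Y : set X) (rho : X -> X -> R) (x : X) : R :=
  Inf (fun r => exists a : {x : X | Y x}, r = rho x (proj1_sig a)).

Definition fz {X : Type} {Y : set X} (d : {x : X | Y x} -> {x : X | Y x} -> R) z a : R :=
  1 + Rmin 1 (d z a).

Definition FF {X : Type} (Y : set X) rho (d : {x : X | Y x} -> {x : X | Y x} -> R) z x : R :=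
  match excluded_middle_informative (Y x) with
  | left H => fz d z (exist _ x H)
  | right _ => Inf (fun r => exists a, r = fz d z a * (rho x (proj1_sig a) / delta Y rho x))
  end.

Definition EE {X : Type} (Y : set X) rho (d : {x : X | Y x} -> {x : X | Y x} -> R) x x' : R :=
  Sup (fun r => exists z, r = Rabs (FF Y rho d z x - FF Y rho d z x')).

Definition sg {X : Type} (Y : set X) rho x x' : R :=
  Rmin (rho x x') (delta Y rho x + delta Y rho x').

Definition DD {X : Type} (Y : set X) rho d x x' : R := sg Y rho x x' + EE Y rho d x x'.

Lemma delta_spec {X : Type} (Y : set X) rho (Hr : is_metric rho) (a0 : {x : X | Y x}) x :
  0 <= delta Y rho x /\ (forall a : {x : X | Y x}, delta Y rho x <= rho x (proj1_sig a)) /\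
  (forall z, (forall a : {x : X | Y x}, z <= rho x (proj1_sig a)) -> z <= delta Y rho x).
Proof.
destruct Hr as [H0 _].
destruct (Inf_spec (fun r => exists a : {x : X | Y x}, r = rho x (proj1_sig a)) (rho x (proj1_sig a0)) 0)
  as [H1 H2].
- exists a0; reflexivity.
- intros r [a ->]. apply H0.
- unfold delta. split; [|split].
  + apply H2. intros r [a ->]. apply H0.
  + intros a. apply H1. exists a; reflexivity.
  + intros z Hz. apply H2. intros r [a ->]. apply Hz.
Qed.

Lemma delta_lt {X : Type} (Y : set X) rho (Hr : is_metric rho) (a0 : {x : X | Y x}) x t :
  delta Y rho x < t -> exists a : {x : X | Y x}, rho x (proj1_sig a) < t.
Proof.
intros H. destruct (Inf_lt (fun r => exists a : {x : X | Y x}, r = rho x (proj1_sig a)) (rho x (proj1_sig a0)) 0 t)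
  as [r [[a ->] Hr']].
- exists a0; reflexivity.
- intros r [a ->]. apply (proj1 Hr).
- exact H.
- exists a; exact Hr'.
Qed.

Lemma delta_lip {X : Type} (Y : set X) rho (Hr : is_metric rho) (a0 : {x : X | Y x}) x x' :
  delta Y rho x <= rho x x' + delta Y rho x'.
Proof.
destruct (delta_spec Y rho Hr a0 x) as [_ [A1 _]].
destruct (delta_spec Y rho Hr a0 x') as [_ [_ B2]].
assert (delta Y rho x - rho x x' <= delta Y rho x'); [|lra].
apply B2. intros a. destruct Hr as [_ [_ [_ Ht]]].
specialize (A1 a). specialize (Ht x x' (proj1_sig a)). lra.
Qed.

Lemma delta_Y {X : Type} (Y : set X) rho (Hr : is_metric rho) (a0 : {x : X | Y x}) x :
  Y x -> delta Y rho x = 0.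
Proof.
intros H. destruct (delta_spec Y rho Hr a0 x) as [A0 [A1 _]].
specialize (A1 (exist _ x H)). simpl in A1.
assert (rho x x = 0) by (apply (proj1 (proj2 Hr)); reflexivity). lra.
Qed.

Lemma rho_refl {T : Type} (rho : T -> T -> R) (Hr : is_metric rho) x : rho x x = 0.
Proof. apply (proj1 (proj2 Hr)); reflexivity. Qed.

Lemma delta_pos (X : topologicalType) (Y : set X) rho (Hr : compatible_metric open rho)
  (HY : closed Y) (a0 : {x : X | Y x}) x : ~ Y x -> 0 < delta Y rho x.
Proof.
intros Hx. assert (Ho : open (~` Y)%classic) by (rewrite openC; exact HY).
destruct Hr as [Hm Hc]. destruct (proj1 (Hc _) Ho x Hx) as [e [He Hb]].
destruct (delta_spec Y rho Hm a0 x) as [_ [_ A2]].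
assert (e <= delta Y rho x); [|lra].
apply A2. intros a. destruct (Rlt_le_dec (rho x (proj1_sig a)) e) as [h|h]; [|exact h].
exfalso. apply (Hb _ h). exact (proj2_sig a).
Qed.

Lemma fz_bounds {X : Type} {Y : set X} (d : {x : X | Y x} -> {x : X | Y x} -> R) (Hd : is_metric d) z a :
  1 <= fz d z a <= 2.
Proof.
unfold fz. destruct Hd as [H0 _]. specialize (H0 z a).
unfold Rmin; destruct (Rle_dec 1 (d z a)); lra.
Qed.

Lemma fz_lip {X : Type} {Y : set X} (d : {x : X | Y x} -> {x : X | Y x} -> R) (Hd : is_metric d) z a b :
  Rabs (fz d z a - fz d z b) <= d a b.
Proof.
unfold fz. destruct Hd as [H0 [_ [Hs Ht]]].
pose proof (Ht z a b). pose proof (Ht z b a). pose proof (Hs a b).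
unfold Rmin; destruct (Rle_dec 1 (d z a)); destruct (Rle_dec 1 (d z b));
unfold Rabs; destruct (Rcase_abs _); pose proof (H0 a b); lra.
Qed.

Lemma FF_Y {X : Type} (Y : set X) rho d z (a : {x : X | Y x}) :
  FF Y rho d z (proj1_sig a) = fz d z a.
Proof.
unfold FF. destruct (excluded_middle_informative (Y (proj1_sig a))) as [H|H].
- destruct a as [x p]. simpl in *. rewrite (proof_irrelevance _ H p). reflexivity.
- exfalso. exact (H (proj2_sig a)).
Qed.

Lemma ratio_ge1 s p : 0 < s -> s <= p -> 1 <= p / s.
Proof.
intros Hs Hp. apply (Rmult_le_reg_r s); [lra|].
replace (p / s * s) with p by (field; lra). lra.
Qed.

Lemma FF_out {X : topologicalType} (Y : set X) rho d (Hr : compatible_metric open rho)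
  (HY : closed Y) (Hd : is_metric d) (a0 : {x : X | Y x}) z x : ~ Y x ->
  (forall a, FF Y rho d z x <= fz d z a * (rho x (proj1_sig a) / delta Y rho x)) /\
  (forall w, (forall a, w <= fz d z a * (rho x (proj1_sig a) / delta Y rho x)) -> w <= FF Y rho d z x) /\
  (forall t, FF Y rho d z x < t -> exists a, fz d z a * (rho x (proj1_sig a) / delta Y rho x) < t).
Proof.
intros Hx. pose proof (delta_pos X Y rho Hr HY a0 x Hx) as Hp.
destruct Hr as [Hm _].
destruct (delta_spec Y rho Hm a0 x) as [_ [A1 _]].
assert (Hb : forall a, 1 <= fz d z a * (rho x (proj1_sig a) / delta Y rho x)).
{ intros a. pose proof (fz_bounds d Hd z a). pose proof (ratio_ge1 _ _ Hp (A1 a)). nra. }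
unfold FF. destruct (excluded_middle_informative (Y x)) as [H|_]; [contradiction|].
destruct (Inf_spec (fun r => exists a, r = fz d z a * (rho x (proj1_sig a) / delta Y rho x))
   (fz d z a0 * (rho x (proj1_sig a0) / delta Y rho x)) 1) as [B1 B2].
- exists a0; reflexivity.
- intros r [a ->]. apply Hb.
- split; [|split].
  + intros a. apply B1. exists a; reflexivity.
  + intros w Hw. apply B2. intros r [a ->]. apply Hw.
  + intros t Ht. destruct (Inf_lt (fun r => exists a, r = fz d z a * (rho x (proj1_sig a) / delta Y rho x))
   (fz d z a0 * (rho x (proj1_sig a0) / delta Y rho x)) 1 t) as [r [[a ->] Hr']].
    * exists a0; reflexivity.
    * intros r [a ->]. apply Hb.
    * exact Ht.
    * exists a; exact Hr'.
Qed.


Lemma ratio_lt s p k : 0 < s -> p < k * s -> p / s < k.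
Proof.
intros Hs Hp. apply (Rmult_lt_reg_r s); [lra|].
replace (p / s * s) with p by (field; lra). lra.
Qed.

Lemma FF_bounds {X : topologicalType} (Y : set X) rho d (Hr : compatible_metric open rho)
  (HY : closed Y) (Hd : is_metric d) (a0 : {x : X | Y x}) z x :
  1 <= FF Y rho d z x <= 4.
Proof.
destruct (excluded_middle_informative (Y x)) as [H|H].
- pose proof (FF_Y Y rho d z (exist _ x H)) as E. simpl in E. rewrite E.
  pose proof (fz_bounds d Hd z (exist _ x H)). lra.
- destruct (FF_out Y rho d Hr HY Hd a0 z x H) as [B1 [B2 _]].
  pose proof (delta_pos X Y rho Hr HY a0 x H) as Hp.
  destruct Hr as [Hm _].
  destruct (delta_spec Y rho Hm a0 x) as [_ [A1 _]].
  split.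
  + apply B2. intros a. pose proof (fz_bounds d Hd z a). pose proof (ratio_ge1 _ _ Hp (A1 a)). nra.
  + destruct (delta_lt Y rho Hm a0 x (2 * delta Y rho x)) as [a Ha]; [lra|].
    pose proof (ratio_lt _ _ 2 Hp Ha). pose proof (B1 a). pose proof (fz_bounds d Hd z a).
    pose proof (ratio_ge1 _ _ Hp (A1 a)). nra.
Qed.

Lemma EE_spec {X : topologicalType} (Y : set X) rho d (Hr : compatible_metric open rho)
  (HY : closed Y) (Hd : is_metric d) (a0 : {x : X | Y x}) x x' :
  (forall z, Rabs (FF Y rho d z x - FF Y rho d z x') <= EE Y rho d x x') /\
  (forall w, (forall z, Rabs (FF Y rho d z x - FF Y rho d z x') <= w) -> EE Y rho d x x' <= w).
Proof.
destruct (Sup_spec (fun r => exists z, r = Rabs (FF Y rho d z x - FF Y rho d z x'))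
  (Rabs (FF Y rho d a0 x - FF Y rho d a0 x')) 3) as [B1 B2].
- exists a0; reflexivity.
- intros r [z ->]. pose proof (FF_bounds Y rho d Hr HY Hd a0 z x).
  pose proof (FF_bounds Y rho d Hr HY Hd a0 z x').
  unfold Rabs; destruct (Rcase_abs _); lra.
- unfold EE. split.
  + intros z. apply B1. exists z; reflexivity.
  + intros w Hw. apply B2. intros r [z ->]. apply Hw.
Qed.

Lemma EE_props {X : topologicalType} (Y : set X) rho d (Hr : compatible_metric open rho)
  (HY : closed Y) (Hd : is_metric d) (a0 : {x : X | Y x}) :
  (forall x y, 0 <= EE Y rho d x y) /\ (forall x, EE Y rho d x x = 0) /\
  (forall x y, EE Y rho d x y = EE Y rho d y x) /\
  (forall x y z, EE Y rho d x z <= EE Y rho d x y + EE Y rho d y z).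
Proof.
assert (G0 : forall x y, 0 <= EE Y rho d x y).
{ intros x y. destruct (EE_spec Y rho d Hr HY Hd a0 x y) as [B1 _].
  pose proof (B1 a0). pose proof (Rabs_pos (FF Y rho d a0 x - FF Y rho d a0 y)). lra. }
split; [exact G0|split; [|split]].
- intros x. destruct (EE_spec Y rho d Hr HY Hd a0 x x) as [_ B2].
  assert (EE Y rho d x x <= 0); [|pose proof (G0 x x); lra].
  apply B2. intros z. rewrite Rminus_diag Rabs_R0. lra.
- assert (forall x y, EE Y rho d x y <= EE Y rho d y x).
  { intros x y. destruct (EE_spec Y rho d Hr HY Hd a0 x y) as [_ B2].
    destruct (EE_spec Y rho d Hr HY Hd a0 y x) as [C1 _].
    apply B2. intros z. rewrite Rabs_minus_sym. apply C1. }
  intros x y. pose proof (H x y). pose proof (H y x). lra.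
- intros x y w. destruct (EE_spec Y rho d Hr HY Hd a0 x w) as [_ B2].
  destruct (EE_spec Y rho d Hr HY Hd a0 x y) as [C1 _].
  destruct (EE_spec Y rho d Hr HY Hd a0 y w) as [D1 _].
  apply B2. intros z. pose proof (C1 z). pose proof (D1 z).
  pose proof (Rabs_triang (FF Y rho d z x - FF Y rho d z y) (FF Y rho d z y - FF Y rho d z w)).
  replace (FF Y rho d z x - FF Y rho d z w) with
    ((FF Y rho d z x - FF Y rho d z y) + (FF Y rho d z y - FF Y rho d z w)) by ring. lra.
Qed.

Lemma sg_props {X : Type} (Y : set X) rho (Hr : is_metric rho) (a0 : {x : X | Y x}) :
  (forall x y, 0 <= sg Y rho x y) /\ (forall x, sg Y rho x x = 0) /\
  (forall x y, sg Y rho x y = sg Y rho y x) /\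
  (forall x y z, sg Y rho x z <= sg Y rho x y + sg Y rho y z) /\
  (forall x y, sg Y rho x y <= rho x y).
Proof.
pose proof (fun x => proj1 (delta_spec Y rho Hr a0 x)) as Dp.
pose proof (delta_lip Y rho Hr a0) as Dl.
destruct Hr as [H0 [H1 [Hs Ht]]].
unfold sg. split; [|split; [|split; [|split]]].
- intros x y. pose proof (H0 x y). pose proof (Dp x). pose proof (Dp y).
  unfold Rmin; destruct (Rle_dec _ _); lra.
- intros x. assert (rho x x = 0) by (apply H1; reflexivity). pose proof (Dp x).
  unfold Rmin; destruct (Rle_dec _ _); lra.
- intros x y. rewrite (Hs x y). rewrite (Rplus_comm (delta Y rho x)). reflexivity.
- intros x y z. pose proof (Ht x y z). pose proof (Dl x y). pose proof (Dl y x). pose proof (Dl z y).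
  pose proof (Dl y z). pose proof (Hs x y). pose proof (Hs y z). pose proof (Dp y).
  unfold Rmin; repeat destruct (Rle_dec _ _); lra.
- intros x y. apply Rmin_l.
Qed.


Lemma ball_open {T : Type} (op : set T -> Prop) rho (Hc : compatible_metric op rho) x r :
  op (fun y => rho x y < r).
Proof.
destruct Hc as [[H0 [H1 [Hs Ht]]] Hc]. apply (proj2 (Hc _)).
intros y Hy. exists (r - rho x y). split; [lra|].
intros z Hz. pose proof (Ht x y z). lra.
Qed.

Lemma ratio_lt_inv s p k : 0 < s -> p / s < k -> p < k * s.
Proof.
intros Hs Hp. replace p with (p / s * s) by (field; lra).
apply Rmult_lt_compat_r; lra.
Qed.

Lemma ratio_ge s p k : 0 < s -> k * s <= p -> k <= p / s.
Proof.
intros Hs Hp. apply (Rmult_le_reg_r s); [lra|].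
replace (p / s * s) with p by (field; lra). lra.
Qed.

Lemma DD_Y {X : topologicalType} (Y : set X) rho d (Hr : compatible_metric open rho)
  (HY : closed Y) (Hd : is_metric d) (a0 : {x : X | Y x}) (a b : {x : X | Y x}) :
  DD Y rho d (proj1_sig a) (proj1_sig b) <= d a b.
Proof.
unfold DD. assert (sg Y rho (proj1_sig a) (proj1_sig b) <= 0).
{ unfold sg. rewrite (delta_Y Y rho (proj1 Hr) a0 _ (proj2_sig a)).
  rewrite (delta_Y Y rho (proj1 Hr) a0 _ (proj2_sig b)). rewrite Rplus_0_l. apply Rmin_r. }
assert (EE Y rho d (proj1_sig a) (proj1_sig b) <= d a b).
{ destruct (EE_spec Y rho d Hr HY Hd a0 (proj1_sig a) (proj1_sig b)) as [_ B2].
  apply B2. intros z. rewrite !FF_Y. apply fz_lip; exact Hd. }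
lra.
Qed.

Lemma fz_self {X : Type} {Y : set X} (d : {x : X | Y x} -> {x : X | Y x} -> R) (Hd : is_metric d) a :
  fz d a a = 1.
Proof.
unfold fz. rewrite (rho_refl d Hd a). unfold Rmin; destruct (Rle_dec _ _); lra.
Qed.

Lemma min1_lt u k : k <= 1 / 2 -> Rmin 1 u < k -> u < k.
Proof. unfold Rmin; destruct (Rle_dec _ _); intros; lra. Qed.

Lemma LocR2 {X : topologicalType} (Y : set X) rho d (Hr : compatible_metric open rho)
  (HY : closed Y) (Hd : compatible_metric (@subspace_open X Y) d) (a0 : {x : X | Y x}) x eps :
  0 < eps -> exists eta, 0 < eta /\ forall x', DD Y rho d x x' < eta -> rho x x' < eps.
Proof.
intros He. pose proof (proj1 Hd) as Hdm. pose proof (proj1 Hr) as Hrm.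
destruct (sg_props Y rho Hrm a0) as [S0 [S1 [S2 [S3 S4]]]].
destruct (EE_props Y rho d Hr HY Hdm a0) as [E0 [E1 [E2 E3]]].
pose proof (fun x => proj1 (delta_spec Y rho Hrm a0 x)) as Dp.
destruct (excluded_middle_informative (Y x)) as [H|H].
- set a := exist _ x H : {x : X | Y x}.
  set B := fun b : {x : X | Y x} => rho x (proj1_sig b) < eps / 2.
  assert (HB : @subspace_open X Y B).
  { exists (fun y => rho x y < eps / 2). split; [|reflexivity].
    exact (ball_open _ rho Hr x (eps / 2)). }
  destruct (proj1 (proj2 Hd B) HB a) as [e1 [He1 Hb1]].
  { unfold B, a; simpl. rewrite (rho_refl rho Hrm). lra. }
  assert (Heta : exists eta, 0 < eta /\ eta <= eps / 4 /\ eta <= e1 /\ eta <= 1 / 2).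
  { exists (Rmin (eps / 4) (Rmin e1 (1 / 2))).
    pose proof (Rmin_l (eps / 4) (Rmin e1 (1/2))). pose proof (Rmin_r (eps / 4) (Rmin e1 (1/2))).
    pose proof (Rmin_l e1 (1/2)). pose proof (Rmin_r e1 (1/2)).
    split; [repeat apply Rmin_glb_lt; lra|lra]. }
  destruct Heta as [eta [Ht0 [Ht1 [Ht2 Ht3]]]].
  exists eta. split; [exact Ht0|].
  intros x' Hx'. unfold DD in Hx'.
  destruct (EE_spec Y rho d Hr HY Hdm a0 x x') as [C1 _].
  pose proof (C1 a) as Ca. pose proof (S0 x x').
  assert (Fx : FF Y rho d a x = 1).
  { pose proof (FF_Y Y rho d a a) as Q. simpl in Q. rewrite Q. apply fz_self; exact Hdm. }
  rewrite Fx in Ca.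
  destruct (excluded_middle_informative (Y x')) as [H'|H'].
  + set b := exist _ x' H' : {x : X | Y x}.
    pose proof (FF_Y Y rho d a b) as Q. simpl in Q. rewrite Q in Ca.
    assert (Hdab : d a b < e1).
    { unfold fz in Ca. pose proof (proj1 Hdm a b). apply Rlt_le_trans with eta; [|exact Ht2]; apply (min1_lt _ eta); [lra|].
      revert Ca; unfold Rabs; destruct (Rcase_abs _); intros; lra. }
    pose proof (Hb1 b Hdab) as Hbb. unfold B in Hbb. simpl in Hbb. lra.
  + destruct (FF_out Y rho d Hr HY Hdm a0 a x' H') as [_ [_ B3]].
    assert (Hlt : FF Y rho d a x' < 1 + eta).
    { revert Ca; unfold Rabs; destruct (Rcase_abs _); intros; lra. }
    destruct (B3 _ Hlt) as [b Hb].
    pose proof (delta_pos X Y rho Hr HY a0 x' H') as Hp.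
    destruct (delta_spec Y rho Hrm a0 x') as [_ [A1 _]].
    pose proof (ratio_ge1 _ _ Hp (A1 b)) as Rg.
    pose proof (fz_bounds d Hdm a b) as Fb.
    assert (Hfz : fz d a b < 1 + eta) by nra.
    assert (Hrt : rho x' (proj1_sig b) / delta Y rho x' < 2) by nra.
    pose proof (ratio_lt_inv _ _ _ Hp Hrt) as Hrb.
    assert (Hdab : d a b < e1).
    { unfold fz in Hfz. pose proof (proj1 Hdm a b). apply Rlt_le_trans with eta; [|exact Ht2]; apply (min1_lt _ eta); lra. }
    pose proof (Hb1 b Hdab) as Hbb. unfold B in Hbb.
    pose proof (A1 a) as Axa. simpl in Axa.
    destruct Hrm as [_ [_ [Hs Ht]]].
    assert (sg Y rho x x' = delta Y rho x').
    { unfold sg. rewrite (delta_Y Y rho (proj1 Hr) a0 x H). rewrite Rplus_0_l.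
      apply Rmin_right. rewrite Hs. exact Axa. }
    pose proof (Ht x (proj1_sig b) x'). pose proof (Hs x' (proj1_sig b)).
    pose proof (E0 x x'). lra.
- pose proof (delta_pos X Y rho Hr HY a0 x H) as Hp.
  exists (Rmin eps (delta Y rho x)). split. { apply Rmin_glb_lt; lra. }
  intros x' Hx'. pose proof (Rmin_l eps (delta Y rho x)). pose proof (Rmin_r eps (delta Y rho x)).
  unfold DD in Hx'. pose proof (E0 x x'). pose proof (Dp x').
  revert Hx'. unfold sg, Rmin at 1. destruct (Rle_dec _ _); intros; lra.
Qed.


Lemma ratio_bound p p' s s' t : 0 < s -> s <= p -> p' <= p + t -> s - t <= s' -> 0 <= t ->
  2 * t <= s -> 0 <= p' -> p' / s' <= p / s * (1 + 4 * t / s).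
Proof.
intros Hs Hp Hp' Hs' Ht H2 Hp0.
assert (Hs'0 : 0 < s') by lra.
replace (p / s * (1 + 4 * t / s)) with (p * (s + 4 * t) / (s * s)) by (field; lra).
set q := p * (s + 4 * t) / (s * s).
assert (Hq : q * (s * s) = p * (s + 4 * t)) by (unfold q; field; lra).
assert (Hq0 : 0 <= q).
{ unfold q. apply Rmult_le_pos; [nra|]. apply Rlt_le, Rinv_0_lt_compat. nra. }
apply (Rmult_le_reg_r s'); [lra|].
replace (p' / s' * s') with p' by (field; lra).
assert (q * (s - t) <= q * s') by (apply Rmult_le_compat_l; lra).
assert (p + t <= q * (s - t)).
{ apply (Rmult_le_reg_r (s * s)); [nra|].
  replace (q * (s - t) * (s * s)) with (q * (s * s) * (s - t)) by ring. rewrite Hq.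
  assert (t * (s * s) <= p * t * (3 * s - 4 * t)).
  { assert (s * s <= p * (3 * s - 4 * t)) by nra. nra. }
  nra. }
lra.
Qed.

Lemma KL {X : topologicalType} (Y : set X) rho d (Hr : compatible_metric open rho)
  (HY : closed Y) (Hd : is_metric d) (a0 : {x : X | Y x}) z x1 x2 :
  ~ Y x1 -> ~ Y x2 -> 2 * rho x1 x2 <= delta Y rho x1 ->
  FF Y rho d z x2 <= FF Y rho d z x1 * (1 + 4 * rho x1 x2 / delta Y rho x1).
Proof.
intros N1 N2 Ht.
pose proof (delta_pos X Y rho Hr HY a0 x1 N1) as P1.
pose proof (delta_pos X Y rho Hr HY a0 x2 N2) as P2.
pose proof (proj1 Hr) as Hm.
destruct (FF_out Y rho d Hr HY Hd a0 z x1 N1) as [_ [B2 _]].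
destruct (FF_out Y rho d Hr HY Hd a0 z x2 N2) as [C1 _].
destruct (delta_spec Y rho Hm a0 x1) as [_ [A1 _]].
pose proof (delta_lip Y rho Hm a0 x1 x2) as Dl.
destruct Hm as [H0 [_ [Hs Htr]]].
set t := rho x1 x2. set k := 1 + 4 * t / delta Y rho x1.
assert (Ht0 : 0 <= t) by apply H0.
assert (Hk : 1 <= k).
{ unfold k. assert (0 <= 4 * t / delta Y rho x1); [|lra].
  unfold Rdiv. apply Rmult_le_pos; [lra|]. apply Rlt_le, Rinv_0_lt_compat; lra. }
assert (FF Y rho d z x2 / k <= FF Y rho d z x1).
{ apply B2. intros a. pose proof (C1 a).
  assert (rho x2 (proj1_sig a) / delta Y rho x2 <= rho x1 (proj1_sig a) / delta Y rho x1 * k).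
  { pose proof (Htr x2 x1 (proj1_sig a)) as Q. rewrite (Hs x2 x1) in Q.
    pose proof (A1 a) as Q1. pose proof (H0 x2 (proj1_sig a)) as Q2.
    apply ratio_bound; unfold t in *; lra. }
  pose proof (fz_bounds d Hd z a).
  apply (Rmult_le_reg_r k); [lra|].
  replace (FF Y rho d z x2 / k * k) with (FF Y rho d z x2) by (field; lra).
  nra. }
apply (Rmult_le_reg_r (/ k)). { apply Rinv_0_lt_compat; lra. }
replace (FF Y rho d z x1 * k * / k) with (FF Y rho d z x1) by (field; lra).
exact H.
Qed.


Lemma LocR1 {X : topologicalType} (Y : set X) rho d (Hr : compatible_metric open rho)
  (HY : closed Y) (Hd : compatible_metric (@subspace_open X Y) d) (a0 : {x : X | Y x}) x eps :
  0 < eps -> exists r, 0 < r /\ forall x', rho x x' < r -> DD Y rho d x x' < eps.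
Proof.
intros He. pose proof (proj1 Hd) as Hdm. pose proof (proj1 Hr) as Hrm.
destruct (sg_props Y rho Hrm a0) as [S0 [S1 [S2 [S3 S4]]]].
assert (Main : exists r, 0 < r /\ r <= eps / 2 /\ forall x' z, rho x x' < r ->
   Rabs (FF Y rho d z x - FF Y rho d z x') <= eps / 2).
2:{ destruct Main as [r [Hr0 [Hr1 Hr2]]]. exists r. split; [exact Hr0|].
    intros x' Hx'. destruct (EE_spec Y rho d Hr HY Hdm a0 x x') as [_ B2].
    assert (EE Y rho d x x' <= eps / 2) by (apply B2; intros z; apply Hr2; exact Hx').
    pose proof (S4 x x'). unfold DD. lra. }
destruct Hrm as [H0 [H1 [Hs Htr]]].
destruct (excluded_middle_informative (Y x)) as [H|H].
- set a := exist _ x H : {x : X | Y x}.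
  destruct (ball_open _ d Hd a (eps / 4)) as [U [HU HUe]].
  assert (Hbu : forall b : {x : X | Y x}, (d a b < eps / 4) = U (proj1_sig b)).
  { intros b. exact (f_equal (fun f => f b) HUe). }
  assert (Ux : U x).
  { pose proof (Hbu a) as Q. simpl in Q. rewrite <- Q. rewrite (rho_refl d Hdm). lra. }
  destruct (proj1 (proj2 Hr U) HU x Ux) as [r1 [Hr1 Hr1b]].
  assert (Hclose : forall b : {x : X | Y x}, rho x (proj1_sig b) < r1 -> d a b < eps / 4).
  { intros b Hb. rewrite Hbu. apply Hr1b. exact Hb. }
  assert (Hrr : exists r, 0 < r /\ r <= r1 / 3 /\ r <= eps / 2).
  { exists (Rmin (r1 / 3) (eps / 2)). split; [apply Rmin_glb_lt; lra|].
    split; [apply Rmin_l|apply Rmin_r]. }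
  destruct Hrr as [r [Hr0 [Hra Hrb]]].
  assert (Hth : exists th, 0 < th /\ th <= 1 /\ th <= eps / 16).
  { exists (Rmin 1 (eps / 16)). split; [apply Rmin_glb_lt; lra|].
    split; [apply Rmin_l|apply Rmin_r]. }
  destruct Hth as [th [Th0 [Th1 Th2]]].
  exists r. split; [exact Hr0|]. split; [exact Hrb|].
  intros x' z Hx'.
  assert (Fx : FF Y rho d z x = fz d z a).
  { pose proof (FF_Y Y rho d z a) as Q. simpl in Q. exact Q. }
  rewrite Fx.
  pose proof (fz_bounds d Hdm z a) as Fa.
  destruct (excluded_middle_informative (Y x')) as [H'|H'].
  + set b := exist _ x' H' : {x : X | Y x}.
    pose proof (FF_Y Y rho d z b) as Q. simpl in Q. rewrite Q.
    pose proof (fz_lip d Hdm z a b). assert (d a b < eps / 4) by (apply Hclose; simpl; lra).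
    lra.
  + pose proof (delta_pos X Y rho Hr HY a0 x' H') as Hp.
    destruct (delta_spec Y rho (proj1 Hr) a0 x') as [_ [A1 _]].
    pose proof (A1 a) as Axa. simpl in Axa. rewrite (Hs x' x) in Axa.
    destruct (FF_out Y rho d Hr HY Hdm a0 z x' H') as [B1 [B2 _]].
    assert (Hup : FF Y rho d z x' <= fz d z a + 3 * eps / 8).
    { destruct (delta_lt Y rho (proj1 Hr) a0 x' ((1 + th) * delta Y rho x')) as [b Hb]; [nra|].
      pose proof (ratio_lt _ _ _ Hp Hb) as Hrt.
      pose proof (B1 b). pose proof (fz_bounds d Hdm z b).
      assert (Hxb : rho x (proj1_sig b) < r1).
      { pose proof (Htr x x' (proj1_sig b)). nra. }
      pose proof (Hclose b Hxb). pose proof (fz_lip d Hdm z a b) as Lp.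
      assert (fz d z b <= fz d z a + eps / 4).
      { revert Lp. unfold Rabs; destruct (Rcase_abs _); intros; lra. }
      assert (fz d z b * (rho x' (proj1_sig b) / delta Y rho x') <= fz d z b * (1 + th)).
      { apply Rmult_le_compat_l; lra. }
      nra. }
    assert (Hlo : fz d z a - eps / 4 <= FF Y rho d z x').
    { apply B2. intros b. pose proof (fz_bounds d Hdm z b).
      destruct (Rlt_le_dec (rho x (proj1_sig b)) r1) as [Hb|Hb].
      - pose proof (Hclose b Hb). pose proof (fz_lip d Hdm z a b) as Lp.
        pose proof (ratio_ge1 _ _ Hp (A1 b)).
        assert (fz d z a - eps / 4 <= fz d z b).
        { revert Lp. unfold Rabs; destruct (Rcase_abs _); intros; lra. }
        nra.
      - pose proof (Htr x x' (proj1_sig b)).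
        assert (2 <= rho x' (proj1_sig b) / delta Y rho x').
        { apply ratio_ge; [exact Hp|]. lra. }
        nra. }
    unfold Rabs; destruct (Rcase_abs _); lra.
- pose proof (delta_pos X Y rho Hr HY a0 x H) as Hp.
  set dl := delta Y rho x.
  assert (Hrr : exists r, 0 < r /\ r <= dl / 4 /\ r <= eps * dl / 64 /\ r <= eps / 2).
  { exists (Rmin (dl / 4) (Rmin (eps * dl / 64) (eps / 2))).
    pose proof (Rmin_l (dl / 4) (Rmin (eps * dl / 64) (eps / 2))).
    pose proof (Rmin_r (dl / 4) (Rmin (eps * dl / 64) (eps / 2))).
    pose proof (Rmin_l (eps * dl / 64) (eps / 2)). pose proof (Rmin_r (eps * dl / 64) (eps / 2)).
    split; [|lra]. repeat apply Rmin_glb_lt; unfold dl in *; nra. }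
  destruct Hrr as [r [Hr0 [Hra [Hrb Hrc]]]].
  exists r. split; [exact Hr0|]. split; [exact Hrc|].
  intros x' z Hx'.
  destruct (delta_spec Y rho (proj1 Hr) a0 x) as [_ [A1 _]].
  assert (N2 : ~ Y x').
  { intros H'. pose proof (A1 (exist _ x' H')) as Q. simpl in Q. unfold dl in *. lra. }
  pose proof (delta_pos X Y rho Hr HY a0 x' N2) as Hp'.
  pose proof (delta_lip Y rho (proj1 Hr) a0 x x') as Dl.
  pose proof (H0 x x') as Ht0.
  pose proof (FF_bounds Y rho d Hr HY Hdm a0 z x) as F1.
  pose proof (FF_bounds Y rho d Hr HY Hdm a0 z x') as F2.
  pose proof (KL Y rho d Hr HY Hdm a0 z x x' H N2) as K1.
  pose proof (KL Y rho d Hr HY Hdm a0 z x' x N2 H) as K2.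
  rewrite (Hs x' x) in K2.
  fold dl in K1, Dl.
  assert (K1' : FF Y rho d z x' <= FF Y rho d z x * (1 + 4 * rho x x' / dl)) by (apply K1; lra).
  assert (K2' : FF Y rho d z x <= FF Y rho d z x' * (1 + 4 * rho x x' / delta Y rho x'))
    by (apply K2; lra).
  assert (U1 : rho x x' / dl < eps / 64).
  { apply ratio_lt; [exact Hp|]. lra. }
  assert (U2 : rho x x' / delta Y rho x' < eps / 32).
  { apply ratio_lt; [exact Hp'|].
    assert (0 <= eps * (delta Y rho x' - 3 * dl / 4)) by (apply Rmult_le_pos; lra). nra. }
  replace (4 * rho x x' / dl) with (4 * (rho x x' / dl)) in K1' by (unfold Rdiv; ring).
  replace (4 * rho x x' / delta Y rho x') with (4 * (rho x x' / delta Y rho x')) in K2'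
    by (unfold Rdiv; ring).
  assert (0 <= rho x x' / dl).
  { unfold Rdiv. apply Rmult_le_pos; [lra|]. apply Rlt_le, Rinv_0_lt_compat; lra. }
  assert (0 <= rho x x' / delta Y rho x').
  { unfold Rdiv. apply Rmult_le_pos; [lra|]. apply Rlt_le, Rinv_0_lt_compat; lra. }
  unfold Rabs; destruct (Rcase_abs _); nra.
Qed.


Lemma ext_metric {X : topologicalType} (Y : set X) rho d (Hr : compatible_metric open rho)
  (HY : closed Y) (Hd : compatible_metric (@subspace_open X Y) d) (a0 : {x : X | Y x}) :
  compatible_metric open (DD Y rho d) /\
  (forall a b : {x : X | Y x}, DD Y rho d (proj1_sig a) (proj1_sig b) <= d a b).
Proof.
pose proof (proj1 Hd) as Hdm. pose proof (proj1 Hr) as Hrm.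
destruct (sg_props Y rho Hrm a0) as [S0 [S1 [S2 [S3 S4]]]].
destruct (EE_props Y rho d Hr HY Hdm a0) as [E0 [E1 [E2 E3]]].
split; [|intros a b; apply (DD_Y Y rho d Hr HY Hdm a0)].
split.
- unfold DD. split; [|split; [|split]].
  + intros x y. pose proof (S0 x y). pose proof (E0 x y). lra.
  + intros x y. split.
    * intros Hz. destruct Hrm as [H0 [H1 _]]. apply H1.
      destruct (Rle_lt_or_eq_dec 0 (rho x y) (H0 x y)) as [Hp|Hq]; [|auto].
      destruct (LocR2 Y rho d Hr HY Hd a0 x (rho x y) Hp) as [eta [He Hee]].
      assert (DD Y rho d x y < eta) by (unfold DD; lra).
      pose proof (Hee y H). lra.
    * intros ->. rewrite S1 E1. lra.
  + intros x y. rewrite S2 E2. reflexivity.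
  + intros x y z. pose proof (S3 x y z). pose proof (E3 x y z). lra.
- intros A. split.
  + intros HA x Ax. destruct (proj1 (proj2 Hr A) HA x Ax) as [e [He Hb]].
    destruct (LocR2 Y rho d Hr HY Hd a0 x e He) as [eta [Het Hee]].
    exists eta. split; [exact Het|]. intros y Hy. apply Hb. apply Hee. exact Hy.
  + intros HD. apply (proj2 (proj2 Hr A)). intros x Ax.
    destruct (HD x Ax) as [e [He Hb]].
    destruct (LocR1 Y rho d Hr HY Hd a0 x e He) as [r [Hr0 Hrr]].
    exists r. split; [exact Hr0|]. intros y Hy. apply Hb. apply Hrr. exact Hy.
Qed.

Theorem mainTheorem1 (X : topologicalType) (G : Type)
  (mul : G -> G -> G) (one : G) (inv : G -> G)
  (phi : G -> X -> X) (Y : set X)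
  (HG : is_group mul one inv)
  (Hact : is_action mul one phi)
  (Hmetr : metrizable (@open X))
  (HMIE : MIE (@open X) phi)
  (HYcl : closed Y)
  (HYinv : action_invariant phi Y) :
  MIE (@subspace_open X Y) (restrict_action HYinv).
Proof.
intros d Hd. unfold expansive.
destruct (classic (exists a0 : {x : X | Y x}, True)) as [[a0 _]|Hn].
- destruct Hmetr as [rho Hr].
  destruct (ext_metric Y rho d Hr HYcl Hd a0) as [Hc Hle].
  destruct (HMIE _ Hc) as [c [Hc0 Hexp]].
  exists c. split; [exact Hc0|]. intros x y Hxy.
  assert (Hne : proj1_sig x <> proj1_sig y).
  { intros E. apply Hxy. destruct x as [x px], y as [y py]. simpl in E. subst y.
    rewrite (proof_irrelevance _ px py). reflexivity. }
  destruct (Hexp _ _ Hne) as [g Hg]. exists g.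
  pose proof (Hle (restrict_action HYinv g x) (restrict_action HYinv g y)) as Q.
  simpl in Q. unfold Rgt in *. lra.
- exists 1. split; [lra|]. intros x. exfalso. apply Hn. exists x. exact I.
Qed.
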